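(* Consider Algorithm MWHVC (described in the context) run on a hypergraph $G=(V,E)$ of rank $f$ and maximum degree $\Delta$ with nonnegative vertex weights $w$, with parameters $\varepsilon\in(0,1]$, $\beta=\varepsilon/(f+\varepsilon)$ and multiplier $\alpha>1$. For every hyperedge $e$, the number of $e$-raise iterations is at most $\log_\alpha\Delta$.
   Context: Let $G=(V,E)$ be a hypergraph: each hyperedge is a nonempty subset of $V$ of size at most $f$ (rank $f$). Vertices have nonnegative weights $w(v)$. For $v\in V$, $E(v)=\{e\in E: v\in e\}$; $\Delta=\max_v |E(v)|\ge 3$. A hyperedge $e$ is covered by $C\subseteq V$ if $e\cap C\neq\emptyset$. The computation is distributed in synchronous rounds on the bipartite network with node set $V\cup E$ and a link between $v$ and $e$ iff $v\in e$. Parameters: $\varepsilon\in(0,1]$, $\beta=\varepsilon/(f+\varepsilon)$, and a multiplier $\alpha>1$. Algorithm MWHVC: Initialize $C\gets\emptyset$ and $E'(v)\gets E(v)$ for every $v$. Iteration $0$: every hyperedge $e$ sets $\mathrm{deal}_0(e)=\beta\cdot\min_{v\in e} w(v)/|E(v)|$ and $\delta_0(e)=\mathrm{deal}_0(e)$. For $i=1,2,\dots$: (a) every vertex $v\notin C$ (not terminated) checks whether $\sum_{e\in E(v)}\delta_{i-1}(e)\ge(1-\beta)w(v)$; if so, $v$ joins $C$, tells every $e\in E'(v)$ that $e$ is covered, and terminates. (b) Every uncovered hyperedge that receives such a message becomes covered, informs all its vertices, and terminates. (c) Every vertex $v\notin C$ that is told $e$ is covered sets $E'(v)\gets E'(v)\setminus\{e\}$;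 if $E'(v)=\emptyset$, $v$ terminates without joining $C$. (d) Every vertex $v\notin C$ sends ''raise'' to all $e\in E'(v)$ if $\sum_{e\in E'(v)}\mathrm{deal}_{i-1}(e)\le(\beta/\alpha)w(v)$, and otherwise sends ''stuck'' to all $e\in E'(v)$. (e) Every uncovered hyperedge $e$ sets $\mathrm{deal}_i(e)=\mathrm{deal}_{i-1}(e)$ if it received some ''stuck'' message, and $\mathrm{deal}_i(e)=\alpha\cdot\mathrm{deal}_{i-1}(e)$ otherwise, and $\delta_i(e)=\delta_{i-1}(e)+\mathrm{deal}_i(e)$. An iteration $i\ge 1$ is an $e$-raise iteration if $\mathrm{deal}_i(e)=\alpha\cdot\mathrm{deal}_{i-1}(e)$. *)

(* Defs.v *)
From HB Require Import structures.
From mathcomp Require Import all_boot all_order all_algebra.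
From mathcomp Require Import reals exp.
Set Implicit Arguments. Unset Strict Implicit. Unset Printing Implicit Defensive.
Import Order.TTheory GRing.Theory Num.Theory.
Local Open Scope ring_scope.

(* Simulation of Algorithm MWHVC.
   V : vertices, E : (index type of) hyperedges, [edges e] : the vertex set of e. *)
Section MWHVC.
Variables (R : realType) (V E : finType) (edges : E -> {set V}) (w : V -> R).
Variables (f : nat) (eps alpha : R).

Definition beta : R := eps / (f%:R + eps).

Definition Eof (v : V) : {set E} := [set e | v \in edges e].

Definition maxdeg : nat := \max_(v : V) #|Eof v|.

Definition ratio (v : V) : R := w v / #|Eof v|%:R.

(* min_{v in e} w(v)/|E(v)| (the hyperedge is nonempty) *)
Definition minratio (e : E) : R :=
  match [pick v in edges e] with
  | Some v0 => \big[Num.min/ratio v0]_(v in edges e) ratio v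
  | None => 0
  end.

Record state := State {
  inC : {set V};
  term : {set V};       (* terminated vertices (C included) *)
  covered : {set E};
  Ep : V -> {set E};
  deal : E -> R;
  delta : E -> R
}.

Definition init : state :=
  State set0 set0 set0 Eof (fun e => beta * minratio e) (fun e => beta * minratio e).

(* one iteration i >= 1, steps (a)-(e); covered hyperedges keep their
   (frozen) deal and delta values. *)
Definition step (s : state) : state :=
  let joins := [set v | (v \notin term s) &&
                 ((1 - beta) * w v <= \sum_(e in Eof v) delta s e)] in
  let newcov := [set e | (e \notin covered s) && [exists v in joins, e \in Ep s v]] in
  let cov' := covered s :|: newcov in
  let Ep' := fun v => if v \in term s :|: joins then Ep s v else Ep s v :\: newcov in
  let term' := term s :|: joins :|:
               [set v | (v \notin term s :|: joins) && (Ep' v == set0)] in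
  let stuck := fun e => [exists v, [&& v \notin term', e \in Ep' v &
                   ~~ (\sum_(e' in Ep' v) deal s e' <= beta / alpha * w v)]] in
  let deal' := fun e => if (e \notin cov') && ~~ stuck e then alpha * deal s e
                        else deal s e in
  let delta' := fun e => if e \notin cov' then delta s e + deal' e else delta s e in
  State (inC s :|: joins) term' cov' Ep' deal' delta'.

Definition state_at (n : nat) : state := iter n step init.

(* iteration i >= 1 is an e-raise iteration: e is uncovered at step (e) of
   iteration i (so deal_i(e) is set by the algorithm) and
   deal_i(e) = alpha * deal_{i-1}(e). *)
Definition raise_iter (e : E) (i : nat) : bool :=
  [&& (0 < i)%N, e \notin covered (state_at i) &
      deal (state_at i) e == alpha * deal (state_at i.-1) e].

Definition num_raise (e : E) (n : nat) : nat := count (raise_iter e) (iota 1 n).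

End MWHVC.

(* Main.v *)
Require Import Defs.
From HB Require Import structures.
From mathcomp Require Import all_boot all_order all_algebra.
From mathcomp Require Import reals exp.
From mathcomp Require Import ring lra.
Import Order.TTheory GRing.Theory Num.Theory.
Local Open Scope ring_scope.
Set Implicit Arguments. Unset Strict Implicit. Unset Printing Implicit Defensive.

Section Proof.
Variables (R : realType) (V E : finType) (edges : E -> {set V}) (w : V -> R).
Variables (f : nat) (eps alpha : R).
Hypothesis Hne : forall e : E, (0 < #|edges e|)%N.
Hypothesis Hw : forall v, 0 <= w v.
Hypothesis Heps : 0 < eps.
Hypothesis Hal : 1 < alpha.

Let st := state_at edges w f eps alpha.
Let stp := step edges w f eps alpha.

Lemma st_S n : st n.+1 = stp (st n).
Proof. by []. Qed.

Lemma minratio_wit e : exists2 v, v \in edges e & Defs.minratio edges w e = Defs.ratio edges w v.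
Proof.
rewrite /minratio; case: pickP => [v0 Hv0|H]; last first.
  by exfalso; move: (Hne e); rewrite (eq_card0 H).
apply: (big_ind (fun x => exists2 v, v \in edges e & x = Defs.ratio edges w v)).
- by exists v0.
- move=> x y [vx Hx ->] [vy Hy ->]; rewrite /Order.min; case: ifP => _; by [exists vx | exists vy].
- by move=> v Hv; exists v.
Qed.

Lemma cov_mono s : covered s \subset covered (stp s).
Proof. by rewrite /stp /step /= subsetUl. Qed.

Lemma inv_cov e n : e \notin covered (st n) ->
  forall v, v \in edges e -> (v \notin term (st n)) && (e \in Ep (st n) v).
Proof.
elim: n => [|n IH].
  by move=> _ v Hv; rewrite /st /state_at /= in_set0 /Eof inE.
rewrite st_S /stp /step /=.
set s := st n.
set NC := [set v0 | _ & _].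
set J := [set e0 | _ & _].
move=> Hc v Hv.
move: Hc; rewrite in_setU negb_or => /andP[Hcs HNC].
have /andP[Ht HE] := IH Hcs v Hv.
have HJ : v \notin J.
  apply/negP=> HvJ; move/negP: HNC; apply; rewrite inE Hcs /=.
  by apply/existsP; exists v; rewrite HvJ HE.
have HvTJ : v \notin term s :|: J by rewrite in_setU negb_or Ht HJ.
rewrite (negbTE HvTJ) /= inE (negbTE HvTJ) /= in_setD HNC HE /= andbT.
rewrite inE HvTJ (negbTE HvTJ) /=.
apply/set0Pn; exists e; by rewrite in_setD HNC HE.
Qed.

Lemma beta_gt0 : 0 < beta f eps.
Proof. rewrite /beta divr_gt0 //; apply: ltr_wpDl => //; exact: ler0n. Qed.

Lemma ratio_ge0 v : 0 <= Defs.ratio edges w v.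
Proof. by rewrite /Defs.ratio divr_ge0 ?ler0n. Qed.

Lemma minratio_ge0 e : 0 <= Defs.minratio edges w e.
Proof. by have [v _ ->] := minratio_wit e; apply: ratio_ge0. Qed.

Lemma nonneg n e : (0 <= deal (st n) e) && (0 <= delta (st n) e).
Proof.
elim: n e => [|n IH] e.
  by rewrite /st /state_at /= mulr_ge0 ?minratio_ge0 // ltW // beta_gt0.
have Hd : 0 <= deal (st n.+1) e.
  rewrite st_S /stp /step /=; have /andP[H1 _] := IH e.
  by case: ifP => _ //; rewrite mulr_ge0 // ltW // (lt_trans ltr01 Hal).
apply/andP; split; first exact: Hd.
move: Hd; rewrite st_S /stp /step /= => Hd.
have /andP[_ H2] := IH e.
by case: ifP => _ //; rewrite addr_ge0.
Qed.

Lemma deal_cases s e : (deal (stp s) e = deal s e) \/ (deal (stp s) e = alpha * deal s e).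
Proof. by rewrite /stp /step /=; case: ifP => _; [right|left]. Qed.

Lemma deal_cov s e : e \in covered (stp s) -> deal (stp s) e = deal s e.
Proof.
rewrite /stp /step /=; set C := _ :|: _ => H.
by rewrite H.
Qed.

Lemma num_raiseS e n : num_raise edges w f eps alpha e n.+1 =
  (num_raise edges w f eps alpha e n + raise_iter edges w f eps alpha e n.+1)%N.
Proof.
rewrite /num_raise; have -> : iota 1 n.+1 = iota 1 n ++ [:: n.+1] by rewrite -(addn1 n) (iotaD 1 n 1) add1n addn1.
by rewrite /num_raise count_cat /= addn0. Qed.

Lemma deal_eq e n : deal (st n) e = alpha ^+ num_raise edges w f eps alpha e n * deal (st 0) e.
Proof.
elim: n => [|n IH]; first by rewrite /num_raise /= expr0 mul1r.
rewrite num_raiseS.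
have -> : raise_iter edges w f eps alpha e n.+1 =
  (e \notin covered (stp (st n))) && (deal (stp (st n)) e == alpha * deal (st n) e) by [].
rewrite st_S.
case Hc: (e \in covered (stp (st n))) => /=.
  by rewrite addn0 -IH; apply: deal_cov.
case: eqP => [->|Hne'].
  by rewrite addn1 exprS -mulrA -IH.
rewrite addn0 -IH. by case: (deal_cases (st n) e).
Qed.

Lemma raise_step s e v :
  e \notin covered (stp s) -> v \notin term (stp s) -> e \in Ep (stp s) v ->
  deal (stp s) e = alpha * deal s e -> 0 < deal s e -> (forall e', 0 <= deal s e') ->
  deal s e <= beta f eps / alpha * w v.
Proof.
move=> H1 H2 H3 Hr Hpos Hnn; move: H1 H2 H3 Hr; rewrite /stp /step /= => H1 H2 H3.
case: ifP => [/andP[_ Hns] _ | _ Heq]; last first.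
  have h : 0 < (alpha - 1) * deal s e by rewrite mulr_gt0 // subr_gt0.
  by rewrite mulrBl mul1r -Heq subrr ltxx in h.
move/existsPn: Hns => /(_ v); rewrite H2 H3 /= negbK => Hs.
apply: le_trans Hs.
by rewrite (bigD1 e) //= lerDl sumr_ge0.
Qed.

Lemma w_pos s v : v \notin term (stp s) -> (forall e, 0 <= delta s e) -> 0 < w v.
Proof.
move=> H Hd; move: H; rewrite /stp /step /= !in_setU !negb_or => /andP[/andP[Ht HJ] _].
rewrite inE Ht /= in HJ.
rewrite lt_neqAle Hw andbT; apply/eqP => Hw0.
by rewrite -Hw0 mulr0 sumr_ge0 in HJ.
Qed.

Lemma bound e n : alpha ^+ num_raise edges w f eps alpha e n <= (maxdeg edges)%:R.
Proof.
have [vs Hvs Hm] := minratio_wit e.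
have HE : (0 < #|Eof edges vs|)%N by apply/card_gt0P; exists e; rewrite inE.
have HD : (#|Eof edges vs| <= maxdeg edges)%N by rewrite /maxdeg; apply: (leq_bigmax vs).
elim: n => [|n IH].
  rewrite /num_raise /= expr0 ler1n; exact: leq_trans HD.
rewrite num_raiseS.
have -> : raise_iter edges w f eps alpha e n.+1 =
  (e \notin covered (stp (st n))) && (deal (stp (st n)) e == alpha * deal (st n) e) by [].
case: andP => [[Hc /eqP Hr]|_]; last by rewrite addn0.
have /andP[Ht HEp] := @inv_cov e n.+1 Hc vs Hvs.
have Hnn : forall e', 0 <= deal (st n) e' by move=> e'; case/andP: (nonneg n e').
have Hnd : forall e', 0 <= delta (st n) e' by move=> e'; case/andP: (nonneg n e').
have Hwp := w_pos Ht Hnd.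
have Hdeal := deal_eq e n.
have Hd0 : deal (st 0) e = beta f eps * (w vs / #|Eof edges vs|%:R) by rewrite /st /state_at /= Hm.
have Hpos : 0 < deal (st n) e.
  rewrite Hdeal Hd0 mulr_gt0 // ?exprn_gt0 ?(lt_trans ltr01 Hal) // mulr_gt0 ?beta_gt0 //.
  by rewrite divr_gt0 // ltr0n.
have := raise_step Hc Ht HEp Hr Hpos Hnn.
rewrite Hdeal Hd0 addn1 exprSr.
set x := alpha ^+ _; set b := beta f eps; set W := w vs; set N := (#|Eof edges vs|)%:R.
have Ha : 0 < alpha by apply: lt_trans Hal.
have HN : 0 < N by rewrite ltr0n.
have Hc0 : 0 < b * W by rewrite mulr_gt0 // beta_gt0.
have -> : x * (b * (W / N)) = (x / N) * (b * W) by rewrite /x; field; rewrite gt_eqF.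
have -> : b / alpha * W = alpha^-1 * (b * W) by field; rewrite gt_eqF.
rewrite ler_pM2r // ler_pdivrMr // => H.
apply: (le_trans _ (_ : N <= (maxdeg edges)%:R)); last by rewrite ler_nat.
rewrite -(ler_pM2r Ha) in H.
by apply: le_trans H _; rewrite mulrAC mulVf ?mul1r // gt_eqF.
Qed.
End Proof.

Theorem mainTheorem4 (R : realType) (V E : finType) (edges : E -> {set V})
  (w : V -> R) (f : nat) (eps alpha : R) :
  injective edges ->
  (forall e : E, 0 < #|edges e| <= f)%N ->
  (forall v : V, 0 <= w v) ->
  (3 <= maxdeg edges)%N ->
  0 < eps -> eps <= 1 ->
  1 < alpha ->
  forall (e : E) (n : nat),
    (num_raise edges w f eps alpha e n)%:R
      <= ln ((maxdeg edges)%:R : R) / ln alpha.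
Proof.
move=> _ Hef Hw H3 Heps _ Hal e n.
have Hne : forall e, (0 < #|edges e|)%N by move=> e'; case/andP: (Hef e').
have Hb := bound f Hne Hw Heps Hal e n.
have Ha : 0 < alpha by apply: lt_trans Hal.
rewrite ler_pdivlMr ?ln_gt0 // mulr_natl -lnXn //.
rewrite ler_ln // posrE ?exprn_gt0 // ltr0n.
exact: leq_trans H3.
Qed.
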